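(* Let $\zeta\in\mathbb{C}^*$. The set $\{\operatorname{Tr} M : M\in G_q(\zeta)\}$ is finite if and only if $\zeta$ is a primitive $n$-th root of unity for some $n\in\{2,3,4,5,6\}$.
   Context: Let $q$ be a formal parameter and let $R_q=\begin{pmatrix} q & 1\\ 0 & 1\end{pmatrix}$, $S_q=\begin{pmatrix} 0 & -q^{-1}\\ 1 & 0\end{pmatrix}\in \mathrm{GL}(2,\mathbb{Z}[q,q^{-1}])$. Let $G_q=\langle R_q,S_q\rangle$ be the group they generate. For $\zeta\in\mathbb{C}^*$, set $G_q(\zeta)=\{M_q|_{q=\zeta} : M_q\in G_q\}\subset \mathrm{GL}(2,\mathbb{C})$. *)

(* Defs.v *)
From HB Require Import structures.
From mathcomp Require Import all_boot all_order all_algebra.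
From mathcomp Require Import reals complex.
Set Implicit Arguments. Unset Strict Implicit. Unset Printing Implicit Defensive.
Import Order.TTheory GRing.Theory Num.Theory.
Local Open Scope ring_scope.

Definition mx2 {F : nzRingType} (a b c d : F) : 'M[F]_2 :=
  \matrix_(i < 2, j < 2)
    if i == 0 then (if j == 0 then a else b) else (if j == 0 then c else d).

Definition Rmx {F : fieldType} (z : F) : 'M[F]_2 := mx2 z 1 0 1.
Definition Smx {F : fieldType} (z : F) : 'M[F]_2 := mx2 0 (- z^-1) 1 0.

(* A letter of a word in the generators R_q, S_q and their inverses:
   (true, b) stands for R_q, (false, b) for S_q; b = true means inverse. *)
Definition letter_eval {F : fieldType} (z : F) (l : bool * bool) : 'M[F]_2 :=
  let g := if l.1 then Rmx z else Smx z in
  if l.2 then invmx g else g.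

Definition word_eval {F : fieldType} (z : F) (w : seq (bool * bool)) : 'M[F]_2 :=
  foldr (fun l M => letter_eval z l *m M) 1%:M w.

(* G_q(z) = { M_q|_{q=z} : M_q in G_q }; every element of G_q = <R_q, S_q> is
   a product of the generators and their inverses, and evaluation at q = z
   (z <> 0) is a group homomorphism, so G_q(z) is the set of evaluated words. *)
Definition Gq_at {F : fieldType} (z : F) : 'M[F]_2 -> Prop :=
  fun M => exists w : seq (bool * bool), M = word_eval z w.

Definition finite_traces {F : fieldType} (z : F) : Prop :=
  exists s : seq F, forall M, Gq_at z M -> \tr M \in s.

(* Main.v *)
Require Import Defs.
From HB Require Import structures.
From mathcomp Require Import all_boot all_order all_algebra all_field.
From mathcomp Require Import reals complex.
From mathcomp Require Import ring lra.
From mathcomp Require Import trigo.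
From Stdlib Require Import Classical.
Import Order.TTheory GRing.Theory Num.Theory.
Local Open Scope ring_scope.
Section MX2.
Variable F : fieldType.
Implicit Types a b c d : F.
Lemma mx2_mul a b c d a' b' c' d' :
  mx2 a b c d *m mx2 a' b' c' d' =
  mx2 (a * a' + b * c') (a * b' + b * d') (c * a' + d * c') (c * b' + d * d').
Proof.
apply/matrixP => i j; rewrite !mxE big_ord_recl big_ord1 !mxE.
by case: i => [[|[|//]] ?]; case: j => [[|[|//]] ?].
Qed.
Lemma mx2_tr a b c d : \tr (mx2 a b c d) = a + d.
Proof. by rewrite /mxtrace big_ord_recl big_ord1 !mxE. Qed.
Lemma det22 (A : 'M[F]_2) : \det A = A 0 0 * A 1 1 - A 0 1 * A 1 0.
Proof.
rewrite (expand_det_row _ 0) big_ord_recl big_ord1 /cofactor !det_mx11 !mxE /=.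
rewrite !expr0 expr1 mul1r mulN1r.
have e1 : (lift 0 0 : 'I_2) = 1 by apply: val_inj.
rewrite e1 mulrN. congr (_ * A _ _ + - (_ * A _ _)).
by apply: val_inj.
Qed.
Lemma mx2_det a b c d : \det (mx2 a b c d) = a * d - b * c.
Proof. by rewrite det22 !mxE. Qed.
Lemma mx2_1 : (1%:M : 'M[F]_2) = mx2 1 0 0 1.
Proof.
apply/matrixP => i j; rewrite !mxE.
by case: i => [[|[|//]] ?]; case: j => [[|[|//]] ?].
Qed.
Lemma mx2_eta (M : 'M[F]_2) : M = mx2 (M 0 0) (M 0 1) (M 1 0) (M 1 1).
Proof.
apply/matrixP => i j; rewrite !mxE.
by case: i => [[|[|//]] ?]; case: j => [[|[|//]] ?]; congr (M _ _); apply: val_inj.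
Qed.
Lemma mx2_scale k a b c d : k *: mx2 a b c d = mx2 (k * a) (k * b) (k * c) (k * d).
Proof.
apply/matrixP => i j; rewrite !mxE.
by case: i => [[|[|//]] ?]; case: j => [[|[|//]] ?].
Qed.
Lemma mx2_add a b c d a' b' c' d' :
  mx2 a b c d + mx2 a' b' c' d' = mx2 (a + a') (b + b') (c + c') (d + d').
Proof.
apply/matrixP => i j; rewrite !mxE.
by case: i => [[|[|//]] ?]; case: j => [[|[|//]] ?].
Qed.
Lemma mx2_inv a b c d : a * d - b * c != 0 ->
  invmx (mx2 a b c d) = (a * d - b * c)^-1 *: mx2 d (- b) (- c) a.
Proof.
move=> h.
have U : mx2 a b c d \in unitmx by rewrite unitmxE mx2_det unitfE.
set N := (_ *: _).
have MN : mx2 a b c d *m N = 1%:M.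
  rewrite /N -scalemxAr mx2_mul mx2_scale mx2_1.
  congr mx2; field; done.
by rewrite -[invmx _]mulmx1 -MN mulKmx.
Qed.
Lemma mx2_CH (M : 'M[F]_2) : M *m M = \tr M *: M - (\det M)%:M.
Proof.
rewrite [in RHS](mx2_eta M) [in LHS](mx2_eta M) mx2_mul mx2_tr mx2_det mx2_scale.
rewrite -scalemx1 mx2_1 mx2_scale -scaleN1r mx2_scale mx2_add.
set a := M 0 0; set b := M 0 1; set c := M 1 0; set d := M 1 1.
congr mx2; ring.
Qed.
End MX2.
Fixpoint vadd (u v : seq int) : seq int :=
  match u, v with
  | [::], v => v
  | u, [::] => u
  | a :: u', b :: v' => (a + b) :: vadd u' v'
  end.
Definition vscale (k : int) (u : seq int) := map (fun a => k * a) u.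
Fixpoint shiftc (c : int) (u : seq int) : seq int * int :=
  match u with
  | [::] => ([::], c)
  | a :: u' => let: (v, c') := shiftc a u' in (c :: v, c')
  end.
Definition mulX (d : nat) (phi : seq int) (u : seq int) :=
  let: (v, c) := shiftc 0 u in
  if size u == d then vadd v (vscale (- c) phi) else 0 :: u.
Definition vmul d phi (u v : seq int) :=
  foldr (fun b acc => vadd (vscale b u) (mulX d phi acc)) (nseq d 0) v.
Definition M4 := (seq int * seq int * seq int * seq int)%type.
Definition mmul d phi (X Y : M4) : M4 :=
  let: (a, b, c, e) := X in let: (a', b', c', e') := Y in
  (vadd (vmul d phi a a') (vmul d phi b c'), vadd (vmul d phi a b') (vmul d phi b e'),
   vadd (vmul d phi c a') (vmul d phi e c'), vadd (vmul d phi c b') (vmul d phi e e')).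
Definition vone d : seq int := 1 :: nseq d.-1 0.
Definition vzero d : seq int := nseq d 0.
Definition vneg u := vscale (-1) u.
Definition gens n d phi : seq M4 :=
  let one := vone d in let zero := vzero d in
  let zr := mulX d phi one in let zi := iter n.-1 (mulX d phi) one in
  [:: (zr, one, zero, one); (zero, vneg zi, one, zero);
      (zi, vneg zi, zero, one); (zero, one, vneg zr, zero)].
Definition mone d : M4 := (vone d, vzero d, vzero d, vone d).
Fixpoint bfs (gs : seq M4) d phi (fuel : nat) (seen frontier : seq M4) : seq M4 :=
  match fuel with
  | 0%N => seen
  | S f =>
    let new := undup [seq Y <- [seq mmul d phi g Y | Y <- frontier, g <- gs] | Y \notin seen] in
    if new is [::] then seen else bfs gs d phi f (seen ++ new) new
  end.
Definition Glist n d phi := bfs (gens n d phi) d phi 100 [:: mone d] [:: mone d].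
Definition check n d phi :=
  let L := Glist n d phi in
  (mone d \in L) && all (fun Y => all (fun g => mmul d phi g Y \in L) (gens n d phi)) L.
Section Sound.
Variable F : fieldType.
Variable z : F.
Definition peval (u : seq int) : F := foldr (fun a acc => a%:~R + z * acc) 0 u.
Lemma peval_vadd u v : peval (vadd u v) = peval u + peval v.
Proof.
elim: u v => [|a u IH] [|b v] /=; rewrite ?add0r ?addr0 //.
by rewrite IH intrD; ring.
Qed.
Lemma peval_vscale k u : peval (vscale k u) = k%:~R * peval u.
Proof.
elim: u => [|a u IH] /=; first by rewrite mulr0.
by rewrite IH intrM; ring.
Qed.
Lemma peval_shiftc c u :
  peval (shiftc c u).1 + (shiftc c u).2%:~R * z ^+ (size u) = c%:~R + z * peval u.
Proof.
elim: u c => [|a u IH] c /=; first by rewrite expr0 mulr1 add0r mulr0 addr0.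
case E : (shiftc a u) => [v c'] /=.
have := IH a; rewrite E /= => <-; rewrite exprS; ring.
Qed.
Lemma size_shiftc c u : size (shiftc c u).1 = size u.
Proof.
elim: u c => [|a u IH] c //=.
case E : (shiftc a u) => [v c'] /=; by rewrite -(IH a) E.
Qed.
Variables (d : nat) (phi : seq int).
Hypothesis hphi : peval phi = - z ^+ d.
Lemma peval_mulX u : peval (mulX d phi u) = z * peval u.
Proof.
rewrite /mulX; have := peval_shiftc 0 u.
case E : (shiftc 0 u) => [v c] /= h.
case: eqP => [sd|_] /=; last by rewrite mulr0z add0r.
rewrite peval_vadd peval_vscale hphi -sd; move: h; rewrite mulr0z add0r => <-; rewrite intrN; ring.
Qed.
Lemma peval_nseq0 k : peval (nseq k 0) = 0.
Proof. by elim: k => [|k IH] //=; rewrite IH mulr0 addr0. Qed.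
Lemma peval_vmul u v : peval (vmul d phi u v) = peval u * peval v.
Proof.
elim: v => [|b v IH] /=; first by rewrite peval_nseq0 mulr0.
rewrite peval_vadd peval_vscale peval_mulX IH; ring.
Qed.
Definition meval (X : M4) : 'M[F]_2 :=
  let: (a, b, c, e) := X in mx2 (peval a) (peval b) (peval c) (peval e).
Lemma meval_mul X Y : meval (mmul d phi X Y) = meval X *m meval Y.
Proof.
case: X => [[[a b] c] e]; case: Y => [[[a' b'] c'] e'].
by rewrite /= mx2_mul !peval_vadd !peval_vmul.
Qed.
Lemma peval_one : peval (vone d) = 1.
Proof. by rewrite /vone /= peval_nseq0 mulr0 addr0. Qed.
Lemma peval_zero : peval (vzero d) = 0.
Proof. exact: peval_nseq0. Qed.
Lemma peval_iter k : peval (iter k (mulX d phi) (vone d)) = z ^+ k.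
Proof.
elim: k => [|k IH]; first by rewrite peval_one expr0.
by rewrite iterS peval_mulX IH exprS.
Qed.
Lemma peval_neg u : peval (vneg u) = - peval u.
Proof. by rewrite /vneg peval_vscale mulN1r. Qed.
Variable n : nat.
Hypothesis n0 : (0 < n)%N.
Hypothesis zn : z ^+ n = 1.
Lemma z_neq0 : z != 0.
Proof.
apply/eqP => z0; move: zn; rewrite z0 expr0n.
by case: n n0 => //= _ _ /eqP; rewrite eq_sym oner_eq0.
Qed.
Lemma zinvE : z^-1 = z ^+ n.-1.
Proof.
have h : z * z ^+ n.-1 = 1 by rewrite -exprS prednK.
by rewrite -[RHS]mul1r -(mulVf z_neq0) -mulrA h mulr1.
Qed.
Lemma meval_eq a b c e : meval (a, b, c, e) = mx2 (peval a) (peval b) (peval c) (peval e).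
Proof. by []. Qed.
Lemma letter_gens l : exists2 g, g \in gens n d phi & letter_eval z l = meval g.
Proof.
have z0 := z_neq0.
set zi := iter n.-1 (mulX d phi) (vone d).
set zr := mulX d phi (vone d).
have mg : forall g, g \in [:: (zr, vone d, vzero d, vone d); (vzero d, vneg zi, vone d, vzero d);
      (zi, vneg zi, vzero d, vone d); (vzero d, vone d, vneg zr, vzero d)] -> g \in gens n d phi by [].
case: l => [[] []].
- exists (zi, vneg zi, vzero d, vone d); first by apply: mg; rewrite !inE eqxx ?orbT.
  rewrite meval_eq /zi !peval_neg peval_iter peval_one peval_zero -zinvE.
  rewrite /letter_eval /Rmx /= mx2_inv; last by rewrite mulr1 mulr0 subr0.
  rewrite mx2_scale.
  by rewrite mulr1 mulr0 subr0 mulr1 mulrN mulr1 oppr0 mulr0 mulVf.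
- exists (zr, vone d, vzero d, vone d); first by apply: mg; rewrite !inE eqxx ?orbT.
  by rewrite meval_eq /zr peval_mulX peval_one mulr1 peval_zero.
- exists (vzero d, vone d, vneg zr, vzero d); first by apply: mg; rewrite !inE eqxx ?orbT.
  rewrite meval_eq /zr !peval_neg peval_mulX peval_one peval_zero mulr1.
  rewrite /letter_eval /Smx /= mx2_inv; last by rewrite mul0r mulr1 sub0r opprK invr_eq0.
  rewrite mx2_scale.
  by congr mx2; field; rewrite z0 oner_neq0.
- exists (vzero d, vneg zi, vone d, vzero d); first by apply: mg; rewrite !inE eqxx ?orbT.
  by rewrite meval_eq /zi peval_neg peval_iter peval_one peval_zero -zinvE.
Qed.
Lemma check_sound : check n d phi -> finite_traces z.
Proof.
rewrite /check; set L := Glist n d phi => /andP [one_in cl].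
have inv : forall w, exists2 Y, Y \in L & word_eval z w = meval Y.
  elim => [|l w [Y YL IH]].
  all: try (have -> : word_eval z (l :: w) = letter_eval z l *m word_eval z w by []; rewrite IH).
  - exists (mone d) => //; have -> : word_eval z [::] = 1%:M by [].
    by rewrite /mone meval_eq peval_one peval_zero mx2_1.
  - have [g gi ->] := letter_gens l.
    exists (mmul d phi g Y); last by rewrite meval_mul.
    by have /allP := cl; move=> /(_ Y YL) /allP /(_ g gi).
exists (map (fun Y => \tr (meval Y)) L) => M [w ->].
have [Y YL ->] := inv w; exact: map_f.
Qed.
End Sound.
Lemma Rinv_eq (F : fieldType) (z : F) : z != 0 -> invmx (Rmx z) = mx2 z^-1 (- z^-1) 0 1.
Proof.
move=> z0; rewrite /Rmx mx2_inv; last by rewrite mulr1 mulr0 subr0.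
by rewrite mx2_scale; congr mx2; field.
Qed.
Lemma Sinv_eq (F : fieldType) (z : F) : z != 0 -> invmx (Smx z) = mx2 0 1 (- z) 0.
Proof.
move=> z0; rewrite /Smx mx2_inv; last by rewrite mul0r mulr1 sub0r opprK invr_eq0.
by rewrite mx2_scale; congr mx2; field; rewrite z0 oner_neq0.
Qed.
Section Six.
Variable F : fieldType.
Variable z : F.
Hypothesis hz : z ^+ 2 - z + 1 = 0.
Definition v6 : 'cV[F]_2 := \col_i (if i == 0 then 1 else 1 - z).
Lemma mx2_v6 a b c d : mx2 a b c d *m v6 = \col_i (if i == 0 then a + b * (1 - z) else c + d * (1 - z)).
Proof.
apply/matrixP => i j; rewrite !mxE big_ord_recl big_ord1 !mxE.
by case: i => [[|[|//]] ?] /=; rewrite mulr1.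
Qed.
Lemma scale_v6 k : k *: v6 = \col_i (if i == 0 then k else k * (1 - z)).
Proof.
apply/matrixP => i j; rewrite !mxE.
by case: i => [[|[|//]] ?] /=; rewrite ?mulr1.
Qed.
Lemma z6_neq0 : z != 0.
Proof. apply/eqP => z0; move: hz; rewrite z0 expr0n /= subr0 add0r => /eqP; by rewrite oner_eq0. Qed.
Lemma z6_6 : z ^+ 6 = 1.
Proof.
have -> : z ^+ 6 = 1 + (z ^+ 2 - z + 1) * (z ^+ 4 + z ^+ 3 - z - 1) by ring.
by rewrite hz mul0r addr0.
Qed.
Lemma six_inv : forall w, exists i j : nat,
  word_eval z w *m v6 = z ^+ i *: v6 /\ \det (word_eval z w) = z ^+ j.
Proof.
have z0 := z6_neq0.
have zi : z^-1 = z ^+ 5.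
  have h : z * z ^+ 5 = 1 by rewrite -exprS z6_6.
  by rewrite -[RHS]mul1r -(mulVf z0) -mulrA h mulr1.
have hz' : z ^+ 2 = z - 1 by apply/eqP; rewrite -subr_eq0; rewrite -hz; apply/eqP; ring.
elim => [|l w [i [j [Hi Hj]]]].
  exists 0%N, 0%N; have -> : word_eval z [::] = 1%:M by [].
  by rewrite mul1mx expr0 scale1r det1.
have -> : word_eval z (l :: w) = letter_eval z l *m word_eval z w by [].
suff [i' [j' [Hi' Hj']]] : exists i' j' : nat, letter_eval z l *m v6 = z ^+ i' *: v6 /\ \det (letter_eval z l) = z ^+ j'.
  exists (i' + i)%N, (j' + j)%N; split.
  - by rewrite -mulmxA Hi -scalemxAr Hi' scalerA -exprD addnC.
  - by rewrite det_mulmx Hj Hj' exprD.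
have e : z^-1 = 1 - z.
  apply: (mulfI z0); rewrite mulfV // mulrBr mulr1 -expr2 hz'; ring.
have col_eq : forall A B A' B' : F, A = A' -> B = B' ->
    \col_i (if i == 0 then A else B) = \col_i (if i == 0 then A' else B') :> 'cV_2.
  by move=> A B A' B' -> ->.
have K : forall A B (k : F), A - B = k * (z ^+ 2 - z + 1) -> A = B.
  by move=> A B k; rewrite hz mulr0 => /eqP; rewrite subr_eq0 => /eqP.
case: l => [[] []]; rewrite /letter_eval /=.
- exists 0%N, 5%N; rewrite Rinv_eq // e mx2_v6 mx2_det scale_v6 -zi e expr0; split.
  + apply: col_eq; last by ring. by apply: (K _ _ (-1)); ring.
  + ring.
- exists 0%N, 1%N; rewrite /Rmx mx2_v6 mx2_det scale_v6 expr0 expr1; split.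
  + by apply: col_eq; ring.
  + ring.
- exists 5%N, 1%N; rewrite Sinv_eq // mx2_v6 mx2_det scale_v6 -zi e expr1; split.
  + apply: col_eq; first by ring. by apply: (K _ _ (-1)); ring.
  + ring.
- exists 1%N, 5%N; rewrite /Smx e mx2_v6 mx2_det scale_v6 -zi e expr1; split.
  + apply: col_eq; first by apply: (K _ _ (-1)); ring. by apply: (K _ _ 1); ring.
  + ring.
Qed.
Lemma six_finite : finite_traces z.
Proof.
have z0 := z6_neq0.
exists [seq z ^+ a + z ^+ b / z ^+ a | a <- iota 0 6, b <- iota 0 6] => M0 [w ->].
have [i [j [Hi Hj]]] := six_inv w.
set M := word_eval z w in Hi Hj *.
have e1 : M 0 0 + M 0 1 * (1 - z) = z ^+ i.
  have := congr1 (fun X : 'cV_2 => X 0 0) Hi; rewrite /= (mx2_eta _ M) mx2_v6 scale_v6 !mxE /=.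
  by [].
have e2 : M 1 0 + M 1 1 * (1 - z) = z ^+ i * (1 - z).
  have := congr1 (fun X : 'cV_2 => X 1 0) Hi; rewrite /= (mx2_eta _ M) mx2_v6 scale_v6 !mxE /=.
  by [].
have zi0 : z ^+ i != 0 by rewrite expf_neq0.
have tr_eq : \tr M = z ^+ i + z ^+ j / z ^+ i.
  rewrite (mx2_eta _ M) mx2_tr -Hj det22.
  apply: (mulIf zi0); rewrite [RHS]mulrDl divfK //.
  set l := z ^+ i in e1 e2 *.
  rewrite -e1 in e2 *.
  have : (M 1 0) = (M 0 0 + M 0 1 * (1 - z) - M 1 1) * (1 - z).
    by rewrite -[M 1 0](addrK (M 1 1 * (1 - z))) e2; ring.
  move=> ->; ring.
rewrite tr_eq -(expr_mod i z6_6) -(expr_mod j z6_6).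
by apply: (allpairs_f (fun a b : nat => z ^+ a + z ^+ b / z ^+ a)); rewrite mem_iota /= add0n ltn_pmod.
Qed.
End Six.
Lemma chk2 : check 2 1 [:: 1] = true. Proof. by vm_compute. Qed.
Lemma chk3 : check 3 2 [:: 1; 1] = true. Proof. by vm_compute. Qed.
Lemma chk4 : check 4 2 [:: 1; 0] = true. Proof. by vm_compute. Qed.
Lemma chk5 : check 5 4 [:: 1; 1; 1; 1] = true. Proof. by vm_compute. Qed.
Lemma if_dir (F : fieldType) (z : F) n : (2 <= n <= 6)%N -> n.-primitive_root z -> finite_traces z.
Proof.
move=> /andP [n2 n6] pn.
have zn := prim_expr_order pn.
have p1 : z - 1 != 0.
  rewrite subr_eq0; have := prim_order_dvd pn 1; rewrite expr1 => <-.
  by rewrite dvdn1; case: n n2 {n6 pn zn} => [|[|]].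
have S : \sum_(i < n) z ^+ i = 0.
  by apply/eqP; move: zn => /eqP; rewrite -subr_eq0 subrX1 mulf_eq0 (negbTE p1).
case: n n2 n6 pn zn S => [|[|[|[|[|[|[|n]]]]]]] //= _ _ pn zn S.
- apply: (@check_sound F z 1 [:: 1] _ 2 isT zn chk2).
  move: S; rewrite !big_ord_recl big_ord0 /peval /= => S.
  apply/eqP; rewrite -subr_eq0 opprK; apply/eqP; rewrite -[RHS]S; ring.
- apply: (@check_sound F z 2 [:: 1; 1] _ 3 isT zn chk3).
  move: S; rewrite !big_ord_recl big_ord0 /peval /= => S.
  apply/eqP; rewrite -subr_eq0 opprK; apply/eqP; rewrite -[RHS]S; ring.
- apply: (@check_sound F z 2 [:: 1; 0] _ 4 isT zn chk4).
  have p2 : z ^+ 2 - 1 != 0.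
    rewrite subr_eq0; have := prim_order_dvd pn 2 => <-; by [].
  have S2 : z ^+ 2 + 1 = 0.
    apply/eqP; move: zn => /eqP; rewrite -subr_eq0.
    have -> : z ^+ 4 - 1 = (z ^+ 2 - 1) * (z ^+ 2 + 1) by ring.
    by rewrite mulf_eq0 (negbTE p2).
  rewrite /peval /=; apply/eqP; rewrite -subr_eq0 opprK; apply/eqP; rewrite -[RHS]S2; ring.
- apply: (@check_sound F z 4 [:: 1; 1; 1; 1] _ 5 isT zn chk5).
  move: S; rewrite !big_ord_recl big_ord0 /peval /= => S.
  apply/eqP; rewrite -subr_eq0 opprK; apply/eqP; rewrite -[RHS]S; ring.
- apply: six_finite.
  have p3 : z ^+ 3 - 1 != 0.
    rewrite subr_eq0; have := prim_order_dvd pn 3 => <-; by [].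
  have p2 : z + 1 != 0.
    have : z ^+ 2 - 1 != 0 by rewrite subr_eq0; have := prim_order_dvd pn 2 => <-.
    by rewrite subr_sqr_1 mulf_eq0 negb_or => /andP [].
  apply/eqP; move: zn => /eqP; rewrite -subr_eq0.
  have -> : z ^+ 6 - 1 = (z ^+ 3 - 1) * (z + 1) * (z ^+ 2 - z + 1) by ring.
  by rewrite !mulf_eq0 (negbTE p2) (negbTE p3).
Qed.
Lemma Phi_root_prim (F : idomainType) n (w : F) :
  n.-primitive_root w -> root (map_poly intr 'Phi_n) w.
Proof.
move=> pw; have n0 := prim_order_gt0 pw.
have H : \prod_(d <- divisors n) (map_poly intr 'Phi_d).[w] == 0 :> F.
  rewrite -horner_prod -rmorph_prod prod_Cyclotomic //.
  by rewrite rmorphB rmorph1 /= map_polyXn !hornerE (prim_expr_order pw) subrr.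
rewrite prodf_seq_eq0 in H; case/hasP: H => d dn /= rd.
have dn' : (d %| n)%N by rewrite dvdn_divisors.
have d0 : (0 < d)%N by apply: (dvdn_gt0 n0) => //; case: d dn' {rd dn} => //; rewrite dvd0n => /eqP h; rewrite h in n0.
case: (eqVneq d n) => [<- //| dne].
exfalso.
have : w ^+ d == 1.
  have Hd : \prod_(e <- divisors d) (map_poly intr 'Phi_e).[w] == 0 :> F.
    rewrite prodf_seq_eq0; apply/hasP; exists d => //.
    by rewrite -dvdn_divisors.
  move: Hd; rewrite -horner_prod -rmorph_prod prod_Cyclotomic //.
  by rewrite rmorphB rmorph1 /= map_polyXn !hornerE subr_eq0.
rewrite -(prim_order_dvd pw) => nd.
have := dvdn_leq d0 nd; have := dvdn_leq n0 dn'.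
move=> h1 h2; apply: (negP dne); rewrite eqn_leq h1 h2.
done.
Qed.
Section Transfer.
Variable R : realType.
Local Notation C := R[i].
Definition PhiQ n : {poly rat} := map_poly intr 'Phi_n.
Lemma PhiQ_map (F : numFieldType) n : map_poly (ratr : rat -> F) (PhiQ n) = map_poly intr 'Phi_n.
Proof.
rewrite /PhiQ -map_poly_comp; apply: eq_map_poly => a /=; exact: ratr_int.
Qed.
Lemma PhiQ_neq0 n : PhiQ n != 0.
Proof.
rewrite /PhiQ map_poly_eq0_id0 ?monic_neq0 ?Cyclotomic_monic //.
by rewrite (monicP (Cyclotomic_monic n)) intr_eq0.
Qed.
Lemma PhiQ_dvd n (z : C) (q : {poly rat}) :
  n.-primitive_root z -> root (map_poly ratr q) z -> PhiQ n %| q.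
Proof.
move=> pz rq.
set g := gcdp (PhiQ n) q.
have rg : root (map_poly (ratr : rat -> C) g) z.
  rewrite /g gcdp_map root_gcd rq andbT PhiQ_map.
  exact: Phi_root_prim.
have g0 : g != 0 by rewrite /g gcdp_eq0 negb_and PhiQ_neq0.
have sg : (1 < size g)%N.
  rewrite -(size_map_poly (ratr : {rmorphism rat -> C})).
  apply: root_size_gt1 rg.
  by rewrite map_poly_eq0.
have [z1 rz1] : exists z1 : algC, root (map_poly ratr g) z1.
  apply/closed_rootP; rewrite size_map_poly.
  by rewrite neq_ltn sg orbT.
have n0 := prim_order_gt0 pz.
have [zeta pzeta] := C_prim_root_exists n0.
have rPhi : root (map_poly ratr (PhiQ n)) z1.
  apply: root_dvdp rz1; rewrite dvdp_map; exact: dvdp_gcdl.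
have pz1 : n.-primitive_root z1.
  by rewrite -(root_cyclotomic pzeta) -(Cintr_Cyclotomic pzeta) -PhiQ_map.
have [p1 [Dp1 _] Hp1] := minCpolyP z1.
have E : p1 = PhiQ n.
  apply: (map_inj_poly (fmorph_inj (ratr : {rmorphism rat -> algC}))); first by rewrite rmorph0.
  by rewrite -Dp1 (minCpoly_cyclotomic pz1) PhiQ_map (Cintr_Cyclotomic pz1).
have := Hp1 g; rewrite rz1 E => /esym h.
apply: dvdp_trans h _; exact: dvdp_gcdr.
Qed.
Lemma transfer n (z z' : C) (q : {poly rat}) :
  n.-primitive_root z -> n.-primitive_root z' ->
  root (map_poly ratr q) z -> root (map_poly ratr q) z'.
Proof.
move=> pz pz' rq.
have /dvdpP [r ->] := @PhiQ_dvd n z q pz rq.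
by rewrite rmorphM rootM /= PhiQ_map Phi_root_prim ?orbT.
Qed.
End Transfer.
Section Trig.
Variable R : realType.
Local Notation C := R[i].
Definition cis (t : R) : C := Complex (cos t) (sin t).
Lemma cmul (a b c d : R) : (Complex a b : C) * Complex c d = Complex (a * c - b * d) (a * d + b * c).
Proof. by []. Qed.
Lemma cisD s t : cis (s + t) = cis s * cis t.
Proof. by rewrite /cis cmul cosD sinD; congr Complex; ring. Qed.
Lemma cis0 : cis 0 = 1.
Proof. by rewrite /cis cos0 sin0. Qed.
Lemma cisX t k : cis t ^+ k = cis (t *+ k).
Proof.
elim: k => [|k IH]; first by rewrite expr0 mulr0n cis0.
by rewrite exprS IH -cisD mulrS.
Qed.
Lemma cos_pi3 : cos (pi / 3%:R) = 1 / 2%:R :> R.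
Proof.
set u := pi / 3%:R.
have h3 : u *+ 2 + u = pi by rewrite /u; field.
have c0 : 0 < cos u.
  apply: cos_gt0_pihalf; have := pi_gt0 R; rewrite /u => hp.
  apply/andP; split; lra.
have e : cos (u *+ 2 + u) = - 1 by rewrite h3 cospi.
rewrite cosD cos_mulr2n sin_mulr2n in e.
have s2 := sin2cos2 u.
set c := cos u in e c0 s2 *; set s := sin u in e s2.
have e2 : (c + 1) * (2%:R * c - 1) ^+ 2 = 0.
  have -> : (c + 1) * (2%:R * c - 1) ^+ 2 = (c ^+ 2 *+ 2 - 1) * c - c * s *+ 2 * s + 1.
    have -> : c * s *+ 2 * s = (c * s ^+ 2) *+ 2 by ring.
    rewrite s2; ring.
  by rewrite e addrC subrr.
move: e2 => /eqP; rewrite mulf_eq0 => /orP [|]; first by move=> /eqP h; lra.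
by rewrite sqrf_eq0 => /eqP h; lra.
Qed.
Lemma cos_2pi_m (m : nat) : (7 <= m)%N -> 1 / 2%:R < cos (pi *+ 2 / m%:R : R).
Proof.
move=> hm; rewrite -cos_pi3.
have hp := pi_gt0 R.
have m7 : (7%:R : R) <= m%:R by rewrite ler_nat.
have m0 : (0 : R) < m%:R by lra.
have t0 : 0 <= pi *+ 2 / m%:R :> R by apply: divr_ge0; [rewrite mulrn_wge0 // ltW | lra].
have tlt : pi *+ 2 / m%:R < pi / 3%:R :> R.
  rewrite ltr_pdivrMr // mulr2n.
  have -> : pi / 3%:R * m%:R = pi * (m%:R / 3%:R) :> R by rewrite mulrAC mulrA.
  nra.
have p3a : 0 <= pi / 3%:R :> R by apply: divr_ge0; lra.
have p3b : pi / 3%:R <= pi :> R by lra.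
rewrite ltr_cos ?tlt // in_itv /= ?p3a ?p3b //.
by rewrite t0 /=; apply: ltW; apply: lt_le_trans tlt _.
Qed.
Lemma cos_neq1 (y : R) : 0 < y < pi *+ 2 -> cos y != 1.
Proof.
move=> /andP [y0 y2]; have hp := pi_gt0 R.
have key : forall u : R, 0 < u <= pi -> cos u != 1.
  move=> u /andP [u0 u1]; rewrite -cos0; apply/eqP => h.
  have := @cos_inj R u 0; rewrite !in_itv /= ltW // u1 lexx ltW //= => /(_ isT isT h) h'.
  by rewrite h' ltxx in u0.
have [yl|yg] := lerP y pi; first by apply: key; rewrite y0 yl.
have -> : cos y = cos (pi *+ 2 - y).
  by rewrite -[RHS]cosN opprB -(cosD2pi (y - pi *+ 2)) subrK.
apply: key; apply/andP; split; rewrite mulr2n; lra.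
Qed.
Lemma cis_prim (m : nat) : (0 < m)%N -> m.-primitive_root (cis (pi *+ 2 / m%:R)).
Proof.
move=> m0; rewrite /primitive_root_of_unity m0 /=; apply/forallP => i.
rewrite unity_rootE cisX.
have m0' : (0 : R) < m%:R by rewrite ltr0n.
case: (eqVneq i.+1 m) => [e|ne].
  rewrite e; have -> : pi *+ 2 / m%:R *+ m = pi *+ 2 :> R by rewrite -mulr_natr mulfVK ?gt_eqF.
  rewrite /cis cos2pi sin2pi eqxx; by apply/eqP.
rewrite eqbF_neg; apply/eqP => h.
have hc : cos (pi *+ 2 / m%:R *+ i.+1) = 1 :> R by have := congr1 (@complex.Re R) h.
have hp := pi_gt0 R.
have il : (i.+1 < m)%N by rewrite ltn_neqAle ne ltn_ord.
have il' : (i.+1%:R : R) < m%:R by rewrite ltr_nat.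
have key2 : 0 < (pi *+ 2 / m%:R *+ i.+1 : R) < pi *+ 2.
  rewrite -mulr_natr; apply/andP; split.
    by rewrite mulr_gt0 ?ltr0n // divr_gt0 // mulrn_wgt0.
  rewrite mulrAC ltr_pdivrMr // ltr_pM2l //; by rewrite mulrn_wgt0.
by move/eqP: hc; rewrite (negbTE (cos_neq1 _ key2)).
Qed.
Lemma cis_inv t : (cis t)^-1 = Complex (cos t) (- sin t).
Proof.
have h : cis t * Complex (cos t) (- sin t) = 1.
  rewrite /cis cmul; have := cos2Dsin2 t => e.
  by congr Complex; [rewrite -e; ring| ring].
have nz : cis t != 0 by apply/eqP => h0; move: h; rewrite h0 mul0r => /eqP; rewrite eq_sym oner_eq0.
by rewrite -[RHS]mul1r -(mulVf nz) -mulrA h mulr1.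
Qed.
Lemma cadd (a b c d : R) : (Complex a b : C) + Complex c d = Complex (a + c) (b + d).
Proof. by []. Qed.
Lemma cis_x t : (cis t)^-1 + 1 + cis t = Complex (1 + 2%:R * cos t) 0.
Proof.
rewrite cis_inv /cis.
have -> : (1 : C) = Complex 1 0 by [].
rewrite !cadd; congr Complex; ring.
Qed.
End Trig.
Definition tP : {poly rat} := 1 + 'X + 'X^2.
Fixpoint qpair (a : nat) : {poly rat} * {poly rat} :=
  match a with
  | 0%N => (2%:R, tP)
  | a'.+1 => let: (u, v) := qpair a' in (v, tP * v - 'X^2 * u)
  end.
Definition qp a := (qpair a).1.
Lemma qp0 : qp 0 = 2%:R. Proof. by []. Qed.
Lemma qp1 : qp 1 = tP. Proof. by []. Qed.
Lemma qpSS a : qp a.+2 = tP * qp a.+1 - 'X^2 * qp a.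
Proof. by rewrite /qp /=; case: (qpair a). Qed.
Section Seq.
Variable R : realType.
Fixpoint cpair (x : R) (a : nat) : R * R :=
  match a with
  | 0%N => (2%:R, x)
  | a'.+1 => let: (u, v) := cpair x a' in (v, x * v - u)
  end.
Definition cs x a := (cpair x a).1.
Lemma cs0 x : cs x 0 = 2%:R. Proof. by []. Qed.
Lemma cs1 x : cs x 1 = x. Proof. by []. Qed.
Lemma csSS x a : cs x a.+2 = x * cs x a.+1 - cs x a.
Proof. by rewrite /cs /=; case: (cpair x a). Qed.
Lemma cs_incr x : 2%:R < x -> forall a, 0 < cs x a < cs x a.+1.
Proof.
move=> x2; elim => [|a /andP [h1 h2]]; first by rewrite cs0 cs1; apply/andP; split; lra.
apply/andP; split; first lra.
rewrite csSS; nra.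
Qed.
Lemma cs_lt x : 2%:R < x -> forall a b, (a < b)%N -> cs x a < cs x b.
Proof.
move=> x2 a; elim => [//|b IH]; rewrite ltnS leq_eqVlt => /orP [/eqP ->|ab].
  by case/andP: (@cs_incr x x2 b).
apply: lt_trans (IH ab) _; by case/andP: (@cs_incr x x2 b).
Qed.
End Seq.
Arguments cs {R}. Arguments cpair {R}. Arguments cs_incr {R x}. Arguments cs_lt {R x}.
Section Hyper.
Variable R : realType.
Local Notation C := R[i].
Definition ev (z : C) (p : {poly rat}) : C := (map_poly ratr p).[z].
Lemma evM z p q : ev z (p * q) = ev z p * ev z q.
Proof. by rewrite /ev rmorphM hornerM. Qed.
Lemma evB z p q : ev z (p - q) = ev z p - ev z q.
Proof. by rewrite /ev rmorphB hornerD hornerN. Qed.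
Lemma evX2 z : ev z 'X^2 = z ^+ 2.
Proof. by rewrite /ev map_polyXn hornerXn. Qed.
Lemma evX z : ev z 'X = z.
Proof. by rewrite /ev map_polyX hornerX. Qed.
Lemma evtP z : ev z tP = 1 + z + z ^+ 2.
Proof. by rewrite /ev /tP !rmorphD /= rmorph1 map_polyX map_polyXn !hornerE. Qed.
Lemma ev2 z : ev z 2%:R = 2%:R.
Proof. by rewrite /ev rmorph_nat !hornerE. Qed.
Local Open Scope complex_scope.
Lemma ev_qp (z : C) (x : R) : z != 0 -> z^-1 + 1 + z = x%:C ->
  forall a, ev z (qp a) = z ^+ a * (cs x a)%:C.
Proof.
move=> z0 hx.
suff H : forall a, ev z (qp a) = z ^+ a * (cs x a)%:C /\ ev z (qp a.+1) = z ^+ a.+1 * (cs x a.+1)%:C.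
  by move=> a; case: (H a).
elim => [|a [IH1 IH2]].
  rewrite qp0 qp1 cs0 cs1 ev2 evtP expr0 mul1r expr1 rmorph_nat; split => //.
  apply: (mulfI (invr_neq0 z0)); rewrite mulrA mulVf // mul1r -hx; field; rewrite ?z0 //.
split => //.
have E : forall u v : R, (x * u - v)%:C = x%:C * u%:C - v%:C by move=> u v; rewrite rmorphB rmorphM.
rewrite qpSS csSS evB !evM evtP evX IH1 IH2 E -hx !exprS.
field; rewrite ?z0 //.
Qed.
Lemma contra_m (z : C) (m : nat) (x : R) a b : (0 < m)%N -> z ^+ m = 1 ->
  z^-1 + 1 + z = x%:C -> 2%:R < x -> (a < b)%N -> ev z (qp a) != ev z (qp b).
Proof.
move=> m0 zm hx x2 ab; apply/eqP.
have z0 : z != 0.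
  apply/eqP => z0; move: zm; rewrite z0 expr0n; case: m m0 => //= m _ /eqP.
  by rewrite eq_sym oner_eq0.
rewrite !(ev_qp _ _ z0 hx) => E.
have [k bk] : exists k, b = (a + k)%N by exists (b - a)%N; rewrite subnKC // ltnW.
subst b.
have lt := cs_lt x2 _ _ ab.
move: E; rewrite exprD -mulrA => /(mulfI (expf_neq0 a z0)) E.
have E2 : ((cs x a) ^+ m)%:C = ((cs x (a + k)) ^+ m)%:C.
  by rewrite !rmorphXn /= E exprMn -exprM mulnC exprM zm expr1n mul1r.
move/complexI: E2 => /eqP; rewrite eqrXn2 //; last 2 first.
- by case/andP: (cs_incr x2 a) => /ltW.
- by case/andP: (cs_incr x2 (a + k)) => /ltW.
have ab' : (a < a + k)%N by [].
by rewrite (lt_eqF (cs_lt x2 _ _ ab')).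
Qed.
Lemma key_hyp (z : C) m a b : m.-primitive_root z -> (m = 1 \/ 7 <= m)%N -> (a < b)%N ->
  ev z (qp a) != ev z (qp b).
Proof.
move=> pz hm ab; apply/eqP => E.
have m0 := prim_order_gt0 pz.
have rq : root (map_poly ratr (qp a - qp b)) z.
  by rewrite /root -/(ev z _) evB E subrr.
case: hm => [m1|m7].
- subst m; have z1 : z = 1 by have := prim_expr_order pz; rewrite expr1.
  have hx : z^-1 + 1 + z = (3%:R : R)%:C.
    by rewrite rmorph_nat z1 invr1; ring.
  have : 2%:R < (3%:R : R) by rewrite ltr_nat.
  move=> x2; move: (contra_m z 1 _ a b isT (prim_expr_order pz) hx x2 ab); by rewrite E eqxx.
- set t := (pi *+ 2 / m%:R : R).
  have pz' := cis_prim R m m0.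
  have rq' := transfer _ _ _ _ _ pz pz' rq.
  have E' : ev (cis R t) (qp a) = ev (cis R t) (qp b).
    by apply/eqP; rewrite -subr_eq0 -evB; exact: rq'.
  have hx := cis_x R t.
  have x2 : 2%:R < 1 + 2%:R * cos t by have := cos_2pi_m R m m7; rewrite -/t; lra.
  have := contra_m _ _ _ _ _ m0 (prim_expr_order pz') hx x2 ab; by rewrite E' eqxx.
Qed.
End Hyper.
Arguments ev {R}. Arguments key_hyp {R}. Arguments evB {R}. Arguments evM {R}. Arguments evtP {R}. Arguments evX {R}. Arguments ev2 {R}.
Lemma pigeon (T : eqType) (f : nat -> T) (s : seq T) :
  (forall a, f a \in s) -> exists a b, (a < b)%N /\ f a = f b.
Proof.
move=> Hs; apply: NNPP => H.
have inj : {in iota 0 (size s).+1 &, injective f}.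
  move=> x y _ _ e; case: (ltngtP x y) => // h; exfalso; apply: H.
  - by exists x, y.
  - by exists y, x.
have U : uniq [seq f i | i <- iota 0 (size s).+1] by rewrite (map_inj_in_uniq inj) iota_uniq.
have := uniq_leq_size U.
have sub : {subset [seq f i | i <- iota 0 (size s).+1] <= s} by move=> y /mapP [x _ ->].
by move=> /(_ s sub); rewrite size_map size_iota ltnn.
Qed.
Lemma word_eval_cat (F : fieldType) (z : F) u v :
  word_eval z (u ++ v) = word_eval z u *m word_eval z v.
Proof.
elim: u => [|l u IH]; first by rewrite /= mul1mx.
by rewrite /= IH mulmxA.
Qed.
Definition wW : seq (bool * bool) := [:: (true, false); (true, false); (true, false); (false, false)].
Definition pw a := flatten (nseq a wW).
Lemma wW_eval (F : fieldType) (z : F) : z != 0 ->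
  word_eval z wW = mx2 (1 + z + z ^+ 2) (- z ^+ 2) 1 0.
Proof.
move=> z0; rewrite /word_eval /= /letter_eval /= /Rmx /Smx mulmx1 !mx2_mul.
by congr mx2; field.
Qed.
Lemma tr_pw (R : realType) (z : R[i]) : z != 0 -> forall a,
  \tr (word_eval z (pw a)) = ev z (qp a).
Proof.
move=> z0.
set W := mx2 (1 + z + z ^+ 2) (- z ^+ 2) 1 0.
have PS : forall a, word_eval z (pw a.+1) = W *m word_eval z (pw a).
  by move=> a; have -> : pw a.+1 = wW ++ pw a by []; rewrite word_eval_cat wW_eval.
suff H : forall a, \tr (word_eval z (pw a)) = ev z (qp a) /\
    \tr (word_eval z (pw a.+1)) = ev z (qp a.+1) by move=> a; case: (H a).
elim => [|a [IH1 IH2]].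
  have P0 : word_eval z (pw 0) = 1%:M by [].
  by rewrite PS P0 mulmx1 mxtrace1 qp0 qp1 ev2 evtP mx2_tr addr0.
split => //.
rewrite PS PS mulmxA mx2_CH mulmxBl -scalemxAl mul_scalar_mx -PS.
rewrite linearB /= !mxtraceZ IH1 IH2 qpSS evB !evM evtP evX mx2_tr mx2_det.
ring.
Qed.
Lemma tr_Rpow (F : fieldType) (z : F) k :
  \tr (word_eval z (nseq k (true, false))) = z ^+ k + 1.
Proof.
suff [c ->] : exists c, word_eval z (nseq k (true, false)) = mx2 (z ^+ k) c 0 1.
  by rewrite mx2_tr.
elim: k => [|k [c IH]]; first by exists 0; rewrite /= mx2_1 expr0.
exists (z * c + 1).
have -> : word_eval z (nseq k.+1 (true, false)) = Rmx z *m word_eval z (nseq k (true, false)) by [].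
rewrite IH /Rmx mx2_mul exprS; congr mx2; ring.
Qed.
Theorem corollary5p2 (R : realType) (z : R[i]) (hz : z != 0) :
  finite_traces z <->
  exists n : nat, (2 <= n <= 6)%N /\ n.-primitive_root z.
Proof.
split; last by move=> [n [hn pn]]; exact: (if_dir _ _ _ hn pn).
move=> [s Hs].
have Hf : forall a, ev z (qp a) \in s.
  by move=> a; rewrite -tr_pw //; apply: Hs; exists (pw a).
case: (classic (exists k, (0 < k)%N /\ z ^+ k = 1)) => [[k [k0 zk]] | nrt].
- have [m pm _] := prim_order_exists k0 zk.
  have m0 := prim_order_gt0 pm.
  have [a [b [ab E]]] := pigeon _ _ _ Hf.
  case: (leqP m 6) => m6.
  + case: (eqVneq m 1) => [m1|m1].
    * by exfalso; move: (key_hyp z m a b pm (or_introl m1) ab); rewrite E eqxx.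
    * exists m; split => //; rewrite m6 andbT. 
      case: m m0 m1 {pm m6 E Hf} => [|[|m]] //.
  + by exfalso; move: (key_hyp z m a b pm (or_intror m6) ab); rewrite E eqxx.
- exfalso.
  have Hg : forall k, z ^+ k + 1 \in s.
    move=> k.
    have T := tr_Rpow _ z k.
    rewrite -T.
    apply: (Hs (word_eval z (nseq k (true, false)))).
    by exists (nseq k (true, false)).
  have [a [b [ab E]]] := pigeon _ (fun k => z ^+ k + 1) s Hg.
  apply: nrt; exists (b - a)%N; split; first by rewrite subn_gt0.
  have E' : z ^+ a = z ^+ b by move: E => /= /addIr.
  have h1 : z ^+ a * z ^+ (b - a) = z ^+ a * 1.
    rewrite -exprD subnKC; last exact: ltnW.
    by rewrite mulr1.
  exact: (mulfI (expf_neq0 a hz) h1).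
Qed.
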